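(* Let $\varphi(x)=a_nx^n+\cdots+a_1x+a_0\in\mathbb{C}[x]$ with $a_n\neq0$ have $n$ distinct roots $x_1,\dots,x_n$. For any rational function $h(x)\in R$, $$\sum_{i=1}^n h(x_i)=\frac{b_{n-1}}{a_n},$$ where $b_{n-1}$ is the coefficient of $x^{n-1}$ in the unique polynomial $r(x)$ of degree less than $n$ lying in the coset $\overline{\varphi'(x)h(x)}\in R/(\varphi(x))$.
   Context: $R\subset\mathbb{C}(x)$ denotes the subring of rational functions $p(x)/q(x)$ with $p,q\in\mathbb{C}[x]$ and $q(x_i)\neq0$ for every root $x_i$ of $\varphi$. $(\varphi(x))$ is the ideal of $R$ generated by $\varphi$, and cosets in $R/(\varphi(x))$ are denoted by an overbar. Every coset of $R/(\varphi(x))$ contains a unique polynomial of degree less than $n$. *)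

(* Defs.v *)
From HB Require Import structures.
From mathcomp Require Import all_boot all_order all_algebra.
From mathcomp Require Import fraction.
From mathcomp Require Import complex.
From mathcomp Require Import reals.
Set Implicit Arguments. Unset Strict Implicit. Unset Printing Implicit Defensive.
Import Order.TTheory GRing.Theory Num.Theory.
Local Open Scope ring_scope.

Notation "x %:F" := (tofrac x).

(* The subring R of C(x) attached to phi: rational functions p/q with
   q(x_i) <> 0 for every root x_i of phi. *)
Definition inRloc (C : fieldType) (phi : {poly C}) (f : {fraction {poly C}}) : Prop :=
  exists p q : {poly C},
    (forall x, root phi x -> q.[x] != 0) /\ f = p%:F / q%:F.

Definition in_phi_ideal (C : fieldType) (phi : {poly C}) (f : {fraction {poly C}}) : Prop :=
  exists s, inRloc phi s /\ f = phi%:F * s.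

(* Main.v *)
Require Import Defs.
From mathcomp Require Import all_boot all_order all_algebra.
From mathcomp Require Import fraction complex reals ring.
Import Order.TTheory GRing.Theory Num.Theory.
Local Open Scope ring_scope.

Lemma key (C : fieldType) (n : nat) (phi : {poly C}) (xs : seq C) (h : C -> C)
    (hsize : size phi = n.+1) (hxs_size : size xs = n) (hxs_uniq : uniq xs)
    (hxs_roots : all (root phi) xs) (r : {poly C}) (hr : (size r <= n)%N)
    (hv : forall x, x \in xs -> r.[x] = phi^`().[x] * h x) :
  \sum_(x <- xs) h x = r`_n.-1 / lead_coef phi.
Proof.
have phi0 : phi != 0 by rewrite -size_poly_eq0 hsize.
have lc0 : lead_coef phi != 0 by rewrite lead_coef_eq0.
pose g x := phi %/ ('X - x%:P).
have gK : forall x, x \in xs -> phi = g x * ('X - x%:P).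
  move=> x xin; rewrite divpK // dvdp_XsubCl; exact: (allP hxs_roots).
have g0 : forall x, x \in xs -> g x != 0.
  move=> x xin; apply/eqP=> e; move: phi0; by rewrite (gK x xin) e mul0r eqxx.
have gsz : forall x, x \in xs -> size (g x) = n.
  move=> x xin; have := hsize; rewrite (gK x xin) size_mul ?g0 //; last first.
    by rewrite -size_poly_eq0 size_XsubC.
  by rewrite size_XsubC addn2 /= => -[].
have glc : forall x, x \in xs -> lead_coef (g x) = lead_coef phi.
  by move=> x xin; rewrite [in RHS](gK x xin) lead_coef_Mmonic // monicXsubC.
have groot : forall x y, x \in xs -> y \in xs -> y != x -> root (g x) y.
  move=> x y xin yin yx; have := allP hxs_roots y yin.
  rewrite /root (gK x xin) hornerM hornerXsubC mulf_eq0 subr_eq0 (negbTE yx).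
  by rewrite orbF.
have gx0 : forall x, x \in xs -> (g x).[x] != 0.
  move=> x xin; apply/negP=> /eqP e.
  have : (size xs < size (g x))%N.
    apply: max_poly_roots => //; first exact: g0.
    apply/allP=> y yin; case: (eqVneq y x) => [->|yx]; first by rewrite /root e.
    exact: groot.
  by rewrite gsz // hxs_size ltnn.
have gd : forall x, x \in xs -> phi^`().[x] = (g x).[x].
  move=> x xin; rewrite [in LHS](gK x xin) derivM derivXsubC hornerD !hornerM.
  by rewrite hornerXsubC subrr mulr0 add0r hornerC mulr1.
pose L := \sum_(x <- xs) (r.[x] / (g x).[x]) *: g x.
have rL : r = L.
  apply/eqP; rewrite -subr_eq0; apply/eqP/eqP/negP=> /negP nz.
  have szL : (size L <= n)%N.
    rewrite /L big_seq; apply: (big_ind (fun p : {poly C} => size p <= n)%N).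
    - by rewrite size_poly0.
    - by move=> a b ha hb; rewrite (leq_trans (size_polyD _ _)) // geq_max ha hb.
    - by move=> x xin; rewrite (leq_trans (size_scale_leq _ _)) // gsz.
  have : (size xs < size (r - L)%R)%N.
    apply: max_poly_roots => //; apply/allP=> y yin.
    rewrite /root hornerD hornerN /L horner_sum (bigD1_seq y) //=.
    rewrite big_seq_cond big1 ?addr0.
      by rewrite hornerZ mulfVK ?subrr // gx0.
    move=> x /andP[xin xy]; rewrite hornerZ.
    by rewrite (eqP (groot x y xin yin _)) ?mulr0 // eq_sym.
  have szr : (size (r - L)%R <= n)%N.
    by rewrite (leq_trans (size_polyD _ _)) // size_polyN geq_max hr szL.
  by rewrite hxs_size => /leq_trans /(_ szr); rewrite ltnn.
apply: (canRL (mulfK lc0)).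
rewrite [in RHS]rL /L coef_sum big_distrl /= big_seq [in RHS]big_seq.
apply: eq_bigr=> x xin; rewrite coefZ.
have -> : (g x)`_n.-1 = lead_coef phi by rewrite -(glc x xin) lead_coefE gsz.
by rewrite hv // gd // [_ * h x]mulrC mulfK // gx0.
Qed.

Lemma alg1 (K : fieldType) (a b c d e f g : K) : c != 0 -> d != 0 ->
  a * (b / c) - e = f * (g / d) -> a * b * d - e * c * d = f * g * c.
Proof.
move=> c0 d0 E.
transitivity ((a * (b / c) - e) * (c * d)); first by field.
by rewrite E; field.
Qed.

Lemma alg2 (K : fieldType) (a b c d e : K) : c != 0 -> d != 0 ->
  a * b * d - e * c * d = 0 -> e = a * (b / c).
Proof.
move=> c0 d0 /eqP; rewrite subr_eq0 => /eqP E.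
apply: (mulIf c0); apply: (mulIf d0); by rewrite -E; field.
Qed.

Theorem corollary2 (R : realType) (n : nat) (phi : {poly R[i]}) (xs : seq R[i])
    (hsize : size phi = n.+1)
    (hxs_size : size xs = n) (hxs_uniq : uniq xs)
    (hxs_roots : all (root phi) xs)
    (p q : {poly R[i]}) (hq : forall x, root phi x -> q.[x] != 0)
    (r : {poly R[i]}) (hr_deg : (size r <= n)%N)
    (hr_coset : in_phi_ideal phi ((phi^`())%:F * (p%:F / q%:F) - r%:F)) :
  \sum_(x <- xs) p.[x] / q.[x] = r`_n.-1 / lead_coef phi.
Proof.
apply: (@key _ n phi xs (fun x => p.[x] / q.[x]) hsize hxs_size hxs_uniq hxs_roots r hr_deg) => x xin.
have rx : root phi x := allP hxs_roots x xin.
case: hr_coset => s [[p' [q' [hq' ->]]] E].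
have qx := hq x rx; have q'x := hq' x rx.
have q0 : q != 0 by apply: contraNneq qx => ->; rewrite horner0.
have q'0 : q' != 0 by apply: contraNneq q'x => ->; rewrite horner0.
have qF : q%:F != 0 by rewrite tofrac_eq0.
have q'F : q'%:F != 0 by rewrite tofrac_eq0.
have P : phi^`() * p * q' - r * q * q' = phi * p' * q.
  apply/eqP; rewrite -tofrac_eq; apply/eqP; rewrite !(tofracB, tofracM).
  exact: alg1 qF q'F E.
have e := congr1 (fun t => t.[x]) P.
rewrite /= !hornerM !hornerD !hornerN !hornerM (eqP rx) !mul0r in e.
exact: alg2 qx q'x e.
Qed.
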